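(* Let $n=2^r$, $m\ge1$, and consider the variables $P_{i,j}$ ($i\in[m]$, $j\in[r]$) of the binary $\mathrm{PHP}^m_n$. Let $\mathcal R'$ be the random restriction which, for each pigeon $i$ independently, selects a bit position $j\in[r]$ uniformly at random and sets $P_{i,j}$ to $0$ or $1$ with probability $\frac12$ each. Then a term $T$ that mentions $n'$ pigeons does not evaluate to zero under $\mathcal R'$ (i.e. no literal of $T$ is set false) with probability at most $e^{-n'/(2\log_2 n)}$.
   Context: In the binary Pigeonhole Principle, $P_{i,j}$ is the $j$th bit of the binary representation of the hole of pigeon $i$. A term is a conjunction of literals over the variables $P_{i,j}$; it mentions pigeon $i$ if it contains a literal of some variable $P_{i,j}$. *)

(* Defs.v *)
From mathcomp Require Import all_boot all_order all_algebra.
From mathcomp Require Import all_classical all_reals.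
From mathcomp Require Import sequences exp.
Set Implicit Arguments. Unset Strict Implicit. Unset Printing Implicit Defensive.

Definition bvar (m r : nat) := ('I_m * 'I_r)%type.

(* A literal ((i,j), s) asserts P_{i,j} = s  (s = true: positive literal,
   s = false: negated literal). A term is a (finite) set of literals,
   read as their conjunction. *)
Definition literal (m r : nat) := (bvar m r * bool)%type.
Definition term (m r : nat) := {set literal m r}.

(* An outcome of the random restriction R': for each pigeon i, the chosen
   bit position j_i and the value b_i assigned to P_{i,j_i}. *)
Definition restr (m r : nat) := {ffun 'I_m -> 'I_r * bool}.

Definition lit_false m r (rho : restr m r) (l : literal m r) : bool :=
  ((rho l.1.1).1 == l.1.2) && ((rho l.1.1).2 != l.2).

Definition term_zero m r (T : term m r) (rho : restr m r) : bool :=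
  [exists l in T, lit_false rho l].

Definition mentions m r (T : term m r) (i : 'I_m) : bool :=
  [exists l in T, l.1.1 == i].

Definition npigeons m r (T : term m r) : nat := #|[set i | mentions T i]|.

(* Probability under R' (uniform over all outcomes, i.e. independent uniform
   choices of j_i and b_i for each pigeon) that T does not evaluate to zero. *)
Definition prob_not_zero (R : realType) m r (T : term m r) : R :=
  (#|[set rho : restr m r | ~~ term_zero T rho]|%:R /
   #|[set: restr m r]|%:R)%R.

(* Main.v *)
Require Import Defs.
From mathcomp Require Import all_boot all_order all_algebra.
From mathcomp Require Import all_classical all_reals.
From mathcomp Require Import sequences exp.
From mathcomp Require Import zify.
Import GRing.Theory Num.Theory Order.TTheory.

Section Aux.
Variables (m r : nat) (T : term m r).

Definition Gi (i : 'I_m) : pred ('I_r * bool) :=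
  fun p => [forall l in T, (l.1.1 == i) ==> ~~ ((p.1 == l.1.2) && (p.2 != l.2))].

Lemma card_good :
  #|[set rho : restr m r | ~~ term_zero T rho]| = (\prod_(i : 'I_m) #|Gi i|)%N.
Proof.
have -> : #|[set rho : restr m r | ~~ term_zero T rho]| = #|family Gi|.
  apply: eq_card => rho; rewrite inE; apply/idP/familyP.
  - move=> H i; apply/forall_inP => l lT; apply/implyP => /eqP li.
    apply: contra H => Hf; apply/exists_inP; exists l => //.
    by rewrite /lit_false li.
  - move=> H; apply/negP => /exists_inP [l lT].
    rewrite /lit_false => Hf.
    have /forall_inP /(_ l lT) := H l.1.1.
    by rewrite eqxx Hf.
rewrite card_family.
have E : forall s : seq 'I_m, foldr muln 1 [seq #|Gi x| | x <- s] = (\prod_(x <- s) #|Gi x|)%N.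
  by elim => [|a s IH]; rewrite ?big_nil ?big_cons //= IH.
by rewrite E big_enum.
Qed.

Lemma Gi_le i : (#|Gi i| <= r * 2)%N.
Proof.
by have := max_card (Gi i); rewrite card_prod card_ord card_bool.
Qed.

Lemma Gi_lt i : mentions T i -> (#|Gi i| < r * 2)%N.
Proof.
move=> /exists_inP [l lT /eqP li].
have nx : (l.1.2, ~~ l.2) \notin Gi i.
  apply/negP => /forall_inP /(_ l lT); rewrite li eqxx /=.
  by rewrite eqxx; case: (l.2).
set x := (l.1.2, ~~ l.2) in nx *.
have : (#|Gi i| <= #|predC1 x|)%N.
  apply: subset_leq_card; apply/fintype.subsetP => p pG; rewrite !inE.
  by apply: contraNneq nx => <-.
rewrite cardC1 card_prod card_ord card_bool.
by have := ltn_ord l.1.2; lia.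
Qed.
End Aux.

Theorem lemma5 (R : realType) (n m r : nat) (hn : n = (2 ^ r)%N)
  (hm : (1 <= m)%N) (hr : (1 <= r)%N) (T : term m r) :
  (prob_not_zero R T <=
   expR (- ((npigeons T)%:R / (2 * (ln (n%:R : R) / ln (2 : R))))))%R.
Proof.
rewrite /prob_not_zero card_good cardsT card_ffun card_prod !card_ord card_bool.
have l2 : (0 < ln (2 : R))%R by apply: ln_gt0; rewrite ltr1n.
have hln : (ln (n%:R : R) / ln 2 = r%:R)%R.
  by rewrite hn natrX lnXn // -[(_ *+ r)%R]mulr_natr mulrAC divff ?mul1r // lt0r_neq0.
rewrite hln.
have -> : (2 * r%:R = (r * 2)%N%:R :> R)%R by rewrite natrM mulrC.
set K := (r * 2)%N.
have K0 : (0 < K%:R :> R)%R by rewrite ltr0n /K; lia.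
rewrite natr_prod natrX.
have -> : ((K%:R)^+m = \prod_(i < m) (K%:R : R))%R by rewrite prodr_const card_ord.
rewrite -prodf_div.
apply: (@le_trans _ _ (\prod_(i < m) (if mentions T i then expR (- (1 / K%:R)) else 1))%R).
  apply: ler_prod => i _; apply/andP; split; first by rewrite divr_ge0 // ler0n.
  case: ifP => Hm.
  - have hG := @Gi_lt m r T i Hm.
    rewrite ler_pdivrMr //.
    apply: (@le_trans _ _ (K%:R - 1)%R).
      have : (#|Gi m r T i| <= K.-1)%N by rewrite /K; lia.
      rewrite -(ler_nat R) => h; apply: (le_trans h).
      rewrite -subn1 natrB ?lexx //; rewrite /K; lia.
    have -> : (K%:R - 1 = (1 + - (1 / K%:R)) * K%:R :> R)%R.
      by rewrite mulrDl mul1r mulNr div1r mulVf // lt0r_neq0.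
    by rewrite ler_pM2r // expR_ge1Dx.
  - by rewrite ler_pdivrMr // mul1r ler_nat (@Gi_le m r T i).
rewrite -big_mkcond /= prodr_const -expRM_natl.
match goal with |- context[#|?A|] => have Hc : npigeons T = #|A| end.
  by apply: eq_card => i; rewrite inE.
by rewrite Hc mulrN mulrA mulr1.
Qed.
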